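(* Let $a,b\in\mathbb{Q}^*$ be multiplicatively independent. Then the set of primes $p$ with $\operatorname{ord}_p(a)=\operatorname{ord}_p(b)=0$ such that $(b \bmod p)$ lies in the subgroup $\langle a \bmod p\rangle$ of $\mathbb{F}_p^*$ is infinite.
   Context: Elements $a,b\in\mathbb{Q}^*$ are multiplicatively independent if there are no integers $x,y$, not both zero, with $a^xb^y=1$. For a prime $p$ and $x\in\mathbb{Q}^*$, $\operatorname{ord}_p(x)$ denotes the exponent of $p$ in $x$; when $\operatorname{ord}_p(x)=0$, $x \bmod p$ denotes the reduction of $x$ in $\mathbb{F}_p^*$. *)

(* Defs.v *)
From mathcomp Require Import all_boot all_order all_algebra.
Set Implicit Arguments. Unset Strict Implicit. Unset Printing Implicit Defensive.
Import Order.TTheory GRing.Theory Num.Theory.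

Local Open Scope ring_scope.

Definition ordp (p : nat) (x : rat) : int :=
  (logn p `|numq x|%N)%:Z - (logn p `|denq x|%N)%:Z.

(* Reduction of x modulo p in F_p (meaningful when ord_p(x) = 0). *)
Definition redp (p : nat) (x : rat) : 'F_p :=
  (numq x)%:~R / (denq x)%:~R.

Definition mult_indep (a b : rat) : Prop :=
  forall x y : int, a ^ x * b ^ y = 1 -> x = 0 /\ y = 0.

Definition in_cyclic_subgroup (p : nat) (v u : 'F_p) : Prop :=
  exists k : int, v ^ k = u.

(* Main.v *)
Require Import Defs.
From mathcomp Require Import all_boot all_order all_algebra cyclic.
From mathcomp Require Import ring lra.
Import Order.TTheory GRing.Theory Num.Theory.
Local Open Scope ring_scope.

Lemma Fp_int0 (q : nat) (z : int) : prime q ->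
  ((z%:~R : 'F_q) == 0) = (q %| `|z|)%N.
Proof.
move=> pq; have chq := pchar_Fp pq.
case: z => n /=; first by rewrite (dvdn_pcharf chq).
by rewrite NegzE mulrNz oppr_eq0 (dvdn_pcharf chq).
Qed.

Lemma reduceA (a b : rat) (q k : nat) : prime q ->
  ~~ (q %| `|numq a|)%N -> ~~ (q %| `|denq a|)%N ->
  ~~ (q %| `|numq b|)%N -> ~~ (q %| `|denq b|)%N ->
  (q %| `|(numq a ^+ k * denq b - numq b * denq a ^+ k)%R|)%N ->
  [/\ ordp q a = 0, ordp q b = 0 & in_cyclic_subgroup (redp q a) (redp q b)].
Proof.
move=> pq nr ns nt nu dx.
rewrite /ordp !logn_coprime ?prime_coprime //; split => //.
exists k%:Z; rewrite -exprnP /redp.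
have s0 : (denq a)%:~R != 0 :> 'F_q by rewrite Fp_int0.
have u0 : (denq b)%:~R != 0 :> 'F_q by rewrite Fp_int0.
rewrite expr_div_n; apply/eqP; rewrite eqr_div ?expf_neq0 //.
move: dx; rewrite -Fp_int0 // rmorphB !rmorphM !rmorphXn /= subr_eq0.
by move/eqP->.
Qed.

Lemma bern (h : rat) (k : nat) : 0 <= h -> 1 + k%:R * h <= (1 + h) ^+ k.
Proof.
move=> h0; elim: k => [|k IH]; first by rewrite mul0r addr0 expr0.
rewrite exprS -natr1.
have e0 : 0 <= (1 + h) ^+ k by apply: exprn_ge0; lra.
have kh : 0 <= k%:R * h by apply: mulr_ge0.
nra.
Qed.

Lemma big_pow (c d C : rat) : 1 < `|c| ->
  exists k0 : nat, forall k : nat, (k0 <= k)%N -> C < `|c| ^+ k - `|d|.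
Proof.
move=> c1; set h := `|c| - 1.
have h0 : 0 < h by rewrite /h subr_gt0.
set B := `|(C + `|d|) / h|.
exists (Num.Def.archi_bound B) => k lek.
have hB := archi_boundP (normr_ge0 ((C + `|d|) / h)).
have kB : (Num.Def.archi_bound B)%:R <= k%:R :> rat by rewrite ler_nat.
have e1 : (C + `|d|) / h <= B by apply: ler_norm.
have e2 : C + `|d| <= B * h.
  by rewrite -ler_pdivrMr.
have := @bern h k (ltW h0); have -> : 1 + h = `|c| by rewrite /h; ring.
have : B * h < k%:R * h by rewrite ltr_pM2r //; apply: (lt_le_trans hB).
lra.
Qed.
Definition X (a b : rat) (k : nat) : int := numq a ^+ k * denq b - numq b * denq a ^+ k.

Lemma Xid1 a b k : (X a b k)%:~R = (denq a)%:~R ^+ k * (denq b)%:~R * (a ^+ k - b) :> rat.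
Proof. rewrite /X rmorphB !rmorphM !rmorphXn /= (numqE a) (numqE b).
by move: ((denq a)%:~R : rat) ((denq b)%:~R : rat) => s u; rewrite exprMn; ring. Qed.

Lemma Xid2 a b k : a != 0 -> b != 0 -> (X a b k)%:~R = (numq a)%:~R ^+ k * (numq b)%:~R * (b^-1 - (a^-1) ^+ k) :> rat.
Proof. move=> a0 b0. rewrite /X rmorphB !rmorphM !rmorphXn /= (numqE a) (numqE b) exprVn.
have : a ^+ k != 0 by rewrite expf_neq0.
move: ((denq a)%:~R : rat) ((denq b)%:~R : rat) => s u; rewrite !exprMn.
move: (a ^+ k) (s ^+ k) => A S A0. field. by rewrite A0 b0. Qed.

Lemma int_ge1 (z : int) : z != 0 -> 1 <= `|z%:~R : rat|.
Proof. by move=> z0; apply: norm_intr_ge1; rewrite ?intr_int ?intr_eq0. Qed.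

Lemma growth (a b : rat) : a != 0 -> b != 0 -> `|a| != 1 ->
  forall C : rat, exists k0 : nat, forall k, (k0 <= k)%N -> C < `|(X a b k)%:~R : rat|.
Proof.
move=> a0 b0 a1 C.
have key : forall (m c d : rat) k, 1 <= `|m| -> C < `|c| ^+ k - `|d| ->
   C < `|m * (c ^+ k - d)|.
  move=> m c d k m1 h; rewrite normrM.
  have h2 := lerB_dist (c ^+ k) d; rewrite normrX in h2.
  have h3 : 0 <= `|c ^+ k - d| by [].
  nra.
case: (ltgtP `|a| 1) => ha; last by rewrite ha eqxx in a1.
- have ha' : 1 < `|a^-1| by rewrite normrV ?unitfE // invf_gt1 ?normr_gt0.
  have [k0 Hk] := big_pow (a^-1) (b^-1) C ha'.
  exists k0 => k /Hk hk; rewrite Xid2 // normrM distrC -normrM; apply: key hk.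
  rewrite -rmorphXn -rmorphM; apply: int_ge1.
  by rewrite mulf_neq0 ?expf_neq0 ?numq_eq0.
- have [k0 Hk] := big_pow a b C ha.
  exists k0 => k /Hk hk; rewrite Xid1; apply: key hk.
  rewrite -rmorphXn -rmorphM; apply: int_ge1.
  by rewrite mulf_neq0 ?expf_neq0 // gt_eqF // denq_gt0.
Qed.

Lemma coprime_primes (a b : nat) :
  (forall p, prime p -> (p %| a)%N -> (p %| b)%N -> False) -> coprime a b.
Proof.
move=> H; rewrite /coprime; case g: (gcdn a b) => [|[|g']] //.
- have := dvdn_gcdl a b; have := dvdn_gcdr a b; rewrite g !dvd0n => /eqP b0 /eqP a0; subst a b.
  by case: (H 2%N).
- have g1 : (1 < gcdn a b)%N by rewrite g.
  case: (H (pdiv (gcdn a b))); first exact: pdiv_prime.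
  + exact: dvdn_trans (pdiv_dvd _) (dvdn_gcdl _ _).
  + exact: dvdn_trans (pdiv_dvd _) (dvdn_gcdr _ _).
Qed.

Lemma in_pi (p n : nat) : prime p -> (0 < n)%N -> (p %| n)%N -> p \in \pi(n).
Proof. by move=> pp n0 pn; rewrite mem_primes pp n0. Qed.

Lemma pnat_dvd_exp (R n : nat) : (0 < R)%N -> (0 < n)%N -> \pi(R).-nat n -> (n %| R ^ n)%N.
Proof.
move=> R0 n0 pn; apply/dvdn_partP => // p pin.
have pp : prime p by move: pin; rewrite mem_primes => /andP[].
have pR : p \in \pi(R) := pnatPpi pn pin.
have pdR : (p %| R)%N by move: pR; rewrite mem_primes => /and3P[].
rewrite p_part; apply: (@dvdn_trans (p ^ n)).
  rewrite dvdn_exp2l //; apply: (@leq_trans (p ^ logn p n)).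
    by apply: ltnW; apply: ltn_expl; apply: prime_gt1.
  by apply: dvdn_leq => //; rewrite -p_part dvdn_part.
by apply: dvdn_exp2r.
Qed.

Arguments pnat_dvd_exp {R n}.

Lemma split_part (R T : nat) : (0 < R)%N -> (0 < T)%N ->
  let al := (T`_\pi(R))%N in
  [/\ (al %| T)%N, (0 < al)%N, coprime (T %/ al) R,
      forall K, (al * R <= K)%N -> (al %| R ^ K)%N &
      forall K p, (al * R <= K)%N -> prime p -> (p %| R)%N -> (al * p %| R ^ K)%N].
Proof.
move=> R0 T0 al.
have al0 : (0 < al)%N := part_gt0 _ _.
have alpn : \pi(R).-nat al := part_pnat _ _.
split => //.
- exact: dvdn_part.
- have e := @partnC (\pi(R)) T T0.
  rewrite -{1}e mulKn //.
  apply: p'nat_coprime; first exact: part_pnat.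
  exact: pnat_pi.
- move=> K le. apply: dvdn_trans (pnat_dvd_exp R0 al0 alpn) _.
  rewrite dvdn_exp2l //; apply: leq_trans le; exact: leq_pmulr.
- move=> K p le pp pR.
  have apn : \pi(R).-nat (al * p) by rewrite pnatM alpn pnatE // in_pi.
  have ap0 : (0 < al * p)%N by rewrite muln_gt0 al0 prime_gt0.
  apply: dvdn_trans (pnat_dvd_exp R0 ap0 apn) _.
  rewrite dvdn_exp2l //; apply: leq_trans le; rewrite leq_mul2l dvdn_leq //.
  by rewrite orbT.
Qed.

Lemma EU (r : int) (m j : nat) : r != 0 -> (0 < m)%N -> coprime `|r| m ->
  (m%:Z %| r ^+ (2 * totient m * j) - 1)%Z.
Proof.
move=> r0 m0 cop.
have e : r ^+ (2 * totient m * j) = ((`|r| ^ (totient m)) ^ (2 * j))%N%:Z.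
  rewrite -expnM.
  have -> : (totient m * (2 * j) = 2 * (totient m * j))%N by rewrite mulnCA.
  rewrite -mulnA.
  by rewrite exprM -(real_normK (num_real r)) -abszE -exprM -!natz natrX.
have h : ((`|r| ^ (totient m)) ^ (2 * j) == 1 %[mod m])%N.
  by rewrite -modnXm (Euler_exp_totient cop) modnXm exp1n.
have pos : (1 <= (`|r| ^ (totient m)) ^ (2 * j))%N.
  by rewrite !expn_gt0 absz_gt0 r0.
rewrite e -[1]/(Posz 1) (subzn pos); move: h; rewrite eqn_mod_dvd //.
Qed.

Lemma part_prime (q n : nat) (pi : nat_pred) : prime q -> q \notin pi -> (0 < n)%N ->
  (q %| n)%N -> (q %| n`_pi^')%N.
Proof.
move=> pq qpi n0 qn; move: qn; rewrite -{1}(partnC pi n0) Euclid_dvdM // => /orP[] //.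
move=> qd; have : pi.-nat q := pnat_dvd qd (part_pnat _ _).
by rewrite pnatE // (negbTE qpi).
Qed.
Arguments split_part {R T}.

Lemma cop_nodiv (a b p : nat) : coprime a b -> prime p -> (p %| a)%N -> (p %| b)%N -> False.
Proof.
move=> cop pp pa pb; have : (p %| gcdn a b)%N by rewrite dvdn_gcd pa pb. rewrite (eqP cop) dvdn1 => /eqP p1.
by rewrite p1 in pp.
Qed.

Arguments cop_nodiv {a b p}.

Lemma core (r s t u : int) (N : nat) :
  r != 0 -> t != 0 -> 0 < s -> 0 < u ->
  coprime `|r| `|s| -> coprime `|t| `|u| ->
  (forall k, r ^+ k * u - t * s ^+ k != 0) ->
  (forall C : int, exists k0 : nat, forall k, (k0 <= k)%N -> C < `|r ^+ k * u - t * s ^+ k|) ->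
  exists k q : nat, [/\ prime q, (N <= q)%N, ~~ (q %| `|r|)%N, ~~ (q %| `|s|)%N &
     [/\ ~~ (q %| `|t|)%N, ~~ (q %| `|u|)%N & (q %| `|(r ^+ k * u - t * s ^+ k)%R|)%N]].
Proof.
move=> r0 t0 s0 u0 crs ctu Xn0 grow.
set R := `|r|%N; set S := `|s|%N; set T := `|t|%N; set U := `|u|%N.
have R0 : (0 < R)%N by rewrite absz_gt0.
have T0 : (0 < T)%N by rewrite absz_gt0.
have S0 : (0 < S)%N by rewrite absz_gt0 gt_eqF.
have U0 : (0 < U)%N by rewrite absz_gt0 gt_eqF.
have := split_part R0 T0; set al := (T`_\pi(R))%N => -[alT al0 copt alK alKp].
have := split_part S0 U0; set be := (U`_\pi(S))%N => -[beU be0 copu beK beKp].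
set K := (al * R + be * S)%N.
have alRK : (al * R <= K)%N by apply: leq_addr.
have beSK : (be * S <= K)%N by apply: leq_addl.
have /dvdzP[t1 et] : (al%:Z %| t)%Z by rewrite dvdzE.
have /dvdzP[u1 eu] : (be%:Z %| u)%Z by rewrite dvdzE.
have /dvdzP[rho er] : (al%:Z %| r ^+ K)%Z by rewrite dvdzE abszX; apply: alK.
have /dvdzP[sig es] : (be%:Z %| s ^+ K)%Z by rewrite dvdzE abszX; apply: beK.
have ct1 : coprime `|t1| R.
  by move: copt; rewrite /T et abszM /= mulnK.
have cu1 : coprime `|u1| S.
  by move: copu; rewrite /U eu abszM /= mulnK.
have erho : (`|rho| * al = R ^ K)%N by rewrite -abszX er abszM.
have esig : (`|sig| * be = S ^ K)%N by rewrite -abszX es abszM.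
have rhoR : forall p, prime p -> (p %| R)%N -> (p %| `|rho|)%N.
  move=> p pp pR; have := alKp K p alRK pp pR.
  by rewrite -erho mulnC dvdn_pmul2r.
have sigS : forall p, prime p -> (p %| S)%N -> (p %| `|sig|)%N.
  move=> p pp pS; have := beKp K p beSK pp pS.
  by rewrite -esig mulnC dvdn_pmul2r.
have rhoS : coprime `|rho| S.
  apply: (coprime_dvdl (n := (R ^ K)%N)); first by rewrite -erho dvdn_mulr.
  exact: coprimeXl.
have sigR : coprime `|sig| R.
  apply: (coprime_dvdl (n := (S ^ K)%N)); first by rewrite -esig dvdn_mulr.
  by apply: coprimeXl; rewrite coprime_sym.
pose Z (n : nat) : int := rho * r ^+ n * u1 - t1 * sig * s ^+ n.
have XY : forall n, r ^+ (K + n) * u - t * s ^+ (K + n) = al%:Z * be%:Z * Z n.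
  by move=> n; rewrite /Z (exprD r K n) (exprD s K n) er es eu et; ring.
have copZ : forall n, coprime `|Z n| R /\ coprime `|Z n| S.
  move=> n; split; apply: coprime_primes => p pp pZ.
  - move=> pR.
    have h1 : (p%:Z %| rho * r ^+ n * u1)%Z.
      by rewrite dvdzE !abszM /= -mulnA dvdn_mulr // rhoR.
    have h2 : (p%:Z %| t1 * sig * s ^+ n)%Z.
      have -> : t1 * sig * s ^+ n = rho * r ^+ n * u1 - Z n by rewrite /Z; ring.
      by apply: rpredB => //; rewrite dvdzE.
    move: h2; rewrite dvdzE !abszM abszX /= !Euclid_dvdM // => /orP[/orP[]|].
    + by move=> h; apply: (cop_nodiv ct1 pp h pR).
    + by move=> h; apply: (cop_nodiv sigR pp h pR).
    + rewrite Euclid_dvdX // => /andP[h _]; exact: (cop_nodiv crs pp pR h).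
  - move=> pS.
    have h1 : (p%:Z %| t1 * sig * s ^+ n)%Z.
      by rewrite dvdzE !abszM /= mulnAC dvdn_mull // sigS.
    have h2 : (p%:Z %| rho * r ^+ n * u1)%Z.
      have -> : rho * r ^+ n * u1 = Z n + t1 * sig * s ^+ n by rewrite /Z; ring.
      by apply: rpredD => //; rewrite dvdzE.
    move: h2; rewrite dvdzE !abszM abszX /= !Euclid_dvdM // => /orP[/orP[]|].
    + by move=> h; apply: (cop_nodiv rhoS pp h pS).
    + rewrite Euclid_dvdX // => /andP[h _]; exact: (cop_nodiv crs pp h pS).
    + by move=> h; apply: (cop_nodiv cu1 pp h pS).
have XK : r ^+ K * u - t * s ^+ K = al%:Z * be%:Z * Z 0%N by rewrite -XY addn0.
set y := Z 0%N in XK *.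
have y0 : y != 0.
  by apply: contraNneq (Xn0 K) => e; rewrite XK e mulr0.
have Y0 : (0 < `|y|)%N by rewrite absz_gt0.
have RS0 : (0 < R * S)%N by rewrite muln_gt0 R0 S0.
set P' := ((N`! * T * U)`_(\pi(R * S))^')%N.
have P0 : (0 < P')%N := part_gt0 _ _.
set m := (`|y| * P')%N.
have m0 : (0 < m)%N by rewrite muln_gt0 Y0 P0.
have cmR : coprime m R.
  rewrite coprimeMl (proj1 (copZ 0%N)) /=; rewrite coprime_sym.
  apply: (pnat_coprime (pi := \pi(R * S))); last exact: part_pnat.
  by apply: (pnat_dvd (dvdn_mulr S (dvdnn R))); apply: pnat_pi.
have cmS : coprime m S.
  rewrite coprimeMl (proj2 (copZ 0%N)) /=; rewrite coprime_sym.
  apply: (pnat_coprime (pi := \pi(R * S))); last exact: part_pnat.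
  by apply: (pnat_dvd (dvdn_mull R (dvdnn S))); apply: pnat_pi.
have [k0 Hk0] := grow `|r ^+ K * u - t * s ^+ K|.
set j := k0.
have L1 : (0 < 2 * totient m)%N by rewrite muln_gt0 totient_gt0 m0.
have kk : (k0 <= K + 2 * totient m * j)%N.
  by apply: leq_trans (leq_addl K _); apply: leq_pmull.
have big := Hk0 _ kk.
set Zj := Z (2 * totient m * j)%N.
have XZ : r ^+ (K + 2 * totient m * j) * u - t * s ^+ (K + 2 * totient m * j)
   = al%:Z * be%:Z * Zj by rewrite XY.
have dm : (m%:Z %| Zj - y)%Z.
  have -> : Zj - y = rho * u1 * (r ^+ (2 * totient m * j) - 1)
                    - t1 * sig * (s ^+ (2 * totient m * j) - 1).
    by rewrite /Zj /y /Z expr0; ring.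
  apply: rpredB; apply: dvdz_mull; apply: EU => //.
  - by rewrite coprime_sym.
  - by rewrite gt_eqF.
  - by rewrite coprime_sym.
have dy : (y %| Zj)%Z.
  have -> : Zj = Zj - y + y by rewrite subrK.
  apply: rpredD; last by rewrite dvdzE.
  apply: dvdz_trans dm; rewrite dvdzE /= /m.
  exact: dvdn_mulr.
have /dvdzP[w ew] := dy.
have dw : (P' %| `|w - 1|)%N.
  have : (m%:Z %| (w - 1) * y)%Z.
    by have -> : (w - 1) * y = Zj - y by rewrite ew; ring.
  by rewrite dvdzE abszM /= /m mulnC dvdn_pmul2r.
have Zjn : `|Zj|%N != `|y|%N.
  apply/negP => /eqP e.
  move: big; rewrite XZ XK -!abszE !abszM e.
  by rewrite ltxx.
have w1 : (1 < `|w|)%N.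
  have wn0 : w != 0.
    apply: contraNneq (Xn0 (K + 2 * totient m * j)) => e.
    by rewrite XZ ew e !mul0r mulr0.
  move: Zjn; rewrite ew abszM.
  case: (`|w|%N) (absz_gt0 w) wn0 => [|[|n]] //=.
  - by move=> <-.
  - by rewrite mul1n eqxx.
set q := pdiv `|w|.
have pq : prime q := pdiv_prime w1.
have qw : (q %| `|w|)%N := pdiv_dvd _.
have qP : ~~ (q %| P')%N.
  apply/negP => qP.
  have h1 : (q%:Z %| w)%Z by rewrite dvdzE.
  have h2 : (q%:Z %| w - 1)%Z by rewrite dvdzE; apply: dvdn_trans dw.
  have : (q%:Z %| w - (w - 1))%Z by apply: rpredB.
  rewrite (_ : w - (w - 1) = 1); last by ring.
  by rewrite dvdz1 /= => /eqP q1; rewrite q1 in pq.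
have qZ : (q %| `|Zj|)%N by rewrite ew abszM dvdn_mulr.
have qR : ~~ (q %| R)%N.
  by apply/negP => h; apply: (cop_nodiv (proj1 (copZ _)) pq qZ h).
have qS : ~~ (q %| S)%N.
  by apply/negP => h; apply: (cop_nodiv (proj2 (copZ _)) pq qZ h).
have qpi : q \notin \pi(R * S).
  apply/negP; rewrite mem_primes => /and3P[_ _].
  by rewrite Euclid_dvdM // (negbTE qR) (negbTE qS).
have qNTU : ~~ (q %| N`! * T * U)%N.
  apply/negP => h; move/negP: qP; apply.
  apply: part_prime => //.
  by rewrite !muln_gt0 fact_gt0 T0 U0.
exists (K + 2 * totient m * j)%N, q; split => //.
- rewrite leqNgt; apply/negP => qN; move/negP: qNTU; apply.
  by rewrite -mulnA dvdn_mulr // dvdn_fact // prime_gt0 // ltnW.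
- split.
  + by apply/negP => h; move/negP: qNTU; apply; rewrite -mulnA mulnCA dvdn_mulr.
  + by apply/negP => h; move/negP: qNTU; apply; rewrite dvdn_mull.
  + by rewrite XZ abszM dvdn_mull.
Qed.

Theorem theorem1 (a b : rat) :
  a != 0 -> b != 0 -> mult_indep a b ->
  forall N : nat, exists p : nat,
    [/\ (N <= p)%N, prime p, ordp p a = 0, ordp p b = 0 &
        in_cyclic_subgroup (redp p a) (redp p b)].
Proof.
move=> a0 b0 ind N.
have ra : numq a != 0 by rewrite numq_eq0.
have rb : numq b != 0 by rewrite numq_eq0.
have Xn0 : forall k, X a b k != 0.
  move=> k; apply/negP => /eqP e.
  have : ((X a b k)%:~R : rat) = 0 by rewrite e.
  rewrite Xid1 => /eqP; rewrite !mulf_eq0 expf_eq0 !intr_eq0.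
  rewrite (gt_eqF (denq_gt0 a)) (gt_eqF (denq_gt0 b)) andbF /= subr_eq0 => /eqP e2.
  have := ind k%:Z (-1); rewrite exprN1 -exprnP e2 divff // => /(_ erefl) [_].
  by [].
have a1 : `|a| != 1.
  apply/negP => /eqP e.
  have : a ^+ 2 = 1 by rewrite -(real_normK (num_real a)) e expr1n.
  move=> e2; have := ind 2 0; rewrite -exprnP e2 expr0z mulr1 => /(_ erefl) [].
  by [].
have grow : forall C : int, exists k0 : nat, forall k, (k0 <= k)%N ->
    C < `|numq a ^+ k * denq b - numq b * denq a ^+ k|.
  move=> C; have [k0 H] := growth a b a0 b0 a1 C%:~R.
  exists k0 => k /H; rewrite -intr_norm ltr_int.
  by [].
have [k [q [pq Nq qr qs [qt qu qX]]]] :=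
  @core _ _ _ _ N ra rb (denq_gt0 a) (denq_gt0 b)
    (coprime_num_den a) (coprime_num_den b) Xn0 grow.
have [o1 o2 c] := reduceA a b q k pq qr qs qt qu qX.
by exists q; split.
Qed.
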